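(* Assume the loss function $f(\cdot;\Xi)$ is nonnegative and $B$-Lipschitz for every $\Xi$. Let $\mathcal{D},\tilde{\mathcal{D}}$ be two samples of size $Nn$ (each consisting of $N$ local data sets of size $n$) differing in only a single example. Let $\bar{\mathbf{w}}^T,\bar{\mathbf{v}}^T$ denote the outputs of DFedAvgM after $T$ steps run on $\mathcal{D}$ and $\tilde{\mathcal{D}}$ respectively, and let $\delta_t:=\|\bar{\mathbf{w}}^t-\bar{\mathbf{v}}^t\|$. Then for every $\Xi$ and every $t_0\in\{0,1,\dots,n\}$, under the random selection rule (local samples drawn uniformly at random with replacement), $$\mathbb{E}|f(\bar{\mathbf{w}}^T;\Xi)-f(\bar{\mathbf{v}}^T;\Xi)|\le t_0(\sup f)\left(1-\left(\frac{n-1}{n}\right)^K\right)+B\,\mathbb{E}(\delta_T\mid\delta_{t_0}=0).$$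
   Context: DFedAvgM: $N$ clients connected by a graph with symmetric mixing matrix $\mathbf{M}=[m_{i,j}]$ (nonzero only on graph edges and the diagonal, all-ones vector spanning the null space of $\mathbf{I}-\mathbf{M}$, $\mathbf{I}\succeq\mathbf{M}\succ-\mathbf{I}$). Client $i$ holds local data set $\mathcal{D}_i$ of $n$ examples. In round $t$, each client performs $K$ local steps $\mathbf{w}^{t,k+1}_i=\mathbf{w}^{t,k}_i-\eta_t\nabla f_i(\mathbf{w}^{t,k}_i;\xi^{t,k}_i)+\beta(\mathbf{w}^{t,k}_i-\mathbf{w}^{t,k-1}_i)$, $k=0,\dots,K-1$, with $\mathbf{w}^{t,-1}_i=\mathbf{w}^{t,0}_i$ and $\xi^{t,k}_i$ drawn i.i.d. uniformly with replacement from $\mathcal{D}_i$, then sets $\mathbf{w}^{t+1,0}_i=\sum_\ell m_{i,\ell}\mathbf{w}^{t,K}_\ell$. The averaged iterate is $\bar{\mathbf{w}}^t=\frac1N\sum_i\mathbf{w}^{t,0}_i$ (and $\bar{\mathbf{v}}^t$ analogously for the run on $\tilde{\mathcal{D}}$). $\sup f<\infty$ denotes the uniform bound on the nonnegative loss. *)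

(* Defs.v *)
From HB Require Import structures.
From mathcomp Require Import all_boot all_order all_algebra.
From mathcomp Require Import all_classical all_reals all_analysis.
Set Implicit Arguments. Unset Strict Implicit. Unset Printing Implicit Defensive.
Import Order.TTheory GRing.Theory Num.Theory.
Import numFieldNormedType.Exports.
Local Open Scope ring_scope.
Local Open Scope classical_set_scope.

Section DFedAvgM.
Variables (R : realType) (d : nat) (X : Type).

Definition enorm (v : 'rV[R]_d) : R := Num.sqrt (\sum_(j < d) v 0 j ^+ 2).

Definition grad (f : 'rV[R]_d -> X -> R) (x : X) (w : 'rV[R]_d) : 'rV[R]_d :=
  \row_(j < d) 'D_(delta_mx 0 j) (fun v : 'rV[R]_d => f v x) w.

Variables (N n K : nat).
Variables (f : 'rV[R]_d -> X -> R) (M : 'M[R]_N) (eta : nat -> R) (beta : R).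

(* one selection of local sample indices for a round: client i, step k |-> index *)
Definition selection := {ffun 'I_N * 'I_K -> 'I_n}.

(* K local heavy-ball steps of client i, starting from w (with w^{t,-1} = w^{t,0}),
   on local data Di, step size et, indices given by sel. *)
Definition local_run (et : R) (Di : 'I_n -> X) (i : 'I_N) (sel : selection)
  (w : 'rV[R]_d) : 'rV[R]_d :=
  (foldl (fun (p : 'rV[R]_d * 'rV[R]_d) (k : 'I_K) =>
            (p.1 - et *: grad f (Di (sel (i, k))) p.1 + beta *: (p.1 - p.2), p.1))
         (w, w) (enum 'I_K)).1.

Definition round (D : 'I_N -> 'I_n -> X) (t : nat) (sel : selection)
  (W : 'I_N -> 'rV[R]_d) : 'I_N -> 'rV[R]_d :=
  fun i => \sum_(l < N) M i l *: local_run (eta t) (D l) l sel (W l).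

Fixpoint run_from (D : 'I_N -> 'I_n -> X) (t : nat) (W : 'I_N -> 'rV[R]_d)
  (ss : seq selection) : 'I_N -> 'rV[R]_d :=
  match ss with
  | [::] => W
  | s :: ss' => run_from D t.+1 (round D t s W) ss'
  end.

Definition wbar (D : 'I_N -> 'I_n -> X) (w0 : 'I_N -> 'rV[R]_d) (t : nat)
  (ss : seq selection) : 'rV[R]_d :=
  N%:R^-1 *: \sum_(i < N) run_from D 0 w0 (take t ss) i.

End DFedAvgM.

(* Uniform expectation over a finite sample space, and conditional expectation
   given an event A (convention: 0 if A is empty). *)
Definition Exp (R : realType) (Om : finType) (F : Om -> R) : R :=
  (#|Om|%:R)^-1 * \sum_(o : Om) F o.
Definition CondExp (R : realType) (Om : finType) (F : Om -> R) (A : pred Om) : R :=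
  (\sum_(o : Om | A o) F o) / #|A|%:R.

(* Main.v *)
Require Import Defs.
From HB Require Import structures.
From mathcomp Require Import all_boot all_order all_algebra.
From mathcomp Require Import all_classical all_reals all_analysis.
From mathcomp Require Import ring lra.
Import Order.TTheory GRing.Theory Num.Theory.
Import numFieldNormedType.Exports.
Local Open Scope ring_scope.
Local Open Scope classical_set_scope.

Lemma card_tuple_coord (S : finType) L (t : 'I_L) (Q : pred S) :
  #|[pred o : L.-tuple S | Q (tnth o t)]| = (#|Q| * #|S| ^ L.-1)%N.
Proof.
pose psi := fun g : {ffun 'I_L -> S} => [tuple g i | i < L].
have bpsi : bijective psi.
  exists (fun o : L.-tuple S => [ffun i => tnth o i]).
    by move=> g; apply/ffunP => i; rewrite ffunE tnth_mktuple.
  by move=> o; apply: eq_from_tnth => i; rewrite tnth_mktuple ffunE.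
rewrite -[LHS]sum1_card.
rewrite (reindex psi); last by apply: onW_bij.
rewrite /=.
under eq_bigl => g do rewrite inE /= tnth_mktuple.
pose F := fun i : 'I_L => if i == t then Q else predT.
transitivity #|(family F : simpl_pred {ffun 'I_L -> S})|.
  rewrite -sum1_card; apply: eq_bigl => g.
  apply/idP/familyP => [Hg i | Hg]; rewrite /F.
    by case: eqP => [->|]. 
  by have := Hg t; rewrite /F eqxx.
rewrite card_family foldrE big_map big_enum /= (bigD1 t) //= /F eqxx.
congr (_ * _)%N.
rewrite (eq_bigr (fun _ => #|S|)); last by move=> i /negbTE ->; apply: eq_card.
by rewrite prod_nat_const cardC1 card_ord.
Qed.

Lemma good_sel_ratio (R : realType) N n K (i0 : 'I_N) (j0 : 'I_n) : (0 < n)%N ->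
  (#|[pred s : {ffun 'I_N * 'I_K -> 'I_n} | [forall k, s (i0, k) != j0]]|%:R
    / #|{ffun 'I_N * 'I_K -> 'I_n}|%:R : R) = ((n%:R - 1) / n%:R) ^+ K.
Proof.
move=> n0.
pose F := fun x : 'I_N * 'I_K => if x.1 == i0 then predC1 j0 else predT.
have -> : #|[pred s : {ffun 'I_N * 'I_K -> 'I_n} | [forall k, s (i0, k) != j0]]|
   = #|(family F : simpl_pred {ffun 'I_N * 'I_K -> 'I_n})|.
  apply: eq_card => g; rewrite !inE.
  apply/forallP/familyP => [Hg [i k] | Hg k]; rewrite /F /=.
    by case: eqP => [->|] //=; rewrite !inE Hg.
  by have := Hg (i0, k); rewrite /F /= eqxx inE.
rewrite card_family foldrE big_map big_enum /= card_ffun.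
rewrite natr_prod natrX -prodr_const -prodf_div.
have nR : (n%:R : R) != 0 by rewrite pnatr_eq0 -lt0n.
rewrite (eq_bigr (fun x : 'I_N * 'I_K => if x.1 == i0 then (n%:R - 1) / n%:R else 1)); last first.
  move=> [i k] _; rewrite /F /=; case: eqP => _.
    by rewrite cardC1 card_ord -subn1 natrB.
  by rewrite card_ord divff.
rewrite -(pair_big xpredT xpredT (fun i k => if i == i0 then (n%:R - 1) / n%:R else 1)) /=.
rewrite (bigD1 i0) //= eqxx prodr_const card_ord big1 ?mulr1 //.
by move=> i /negbTE ->; rewrite prodr_const expr1n.
Qed.

Lemma local_run_ext (R : realType) (d : nat) (X : Type) (N n K : nat)
  (f : 'rV[R]_d -> X -> R) (beta et : R) (Di Di' : 'I_n -> X) (i : 'I_N)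
  (sel : selection N n K) (w : 'rV[R]_d) :
  (forall k, Di (sel (i, k)) = Di' (sel (i, k))) ->
  local_run f beta et Di i sel w = local_run f beta et Di' i sel w.
Proof.
move=> E.
pose F := fun (Dj : 'I_n -> X) (p : 'rV[R]_d * 'rV[R]_d) (k : 'I_K) =>
  (p.1 - et *: grad f (Dj (sel (i, k))) p.1 + beta *: (p.1 - p.2), p.1).
have E1 : forall Dj, local_run f beta et Dj i sel w = (foldl (F Dj) (w, w) (enum 'I_K)).1.
  by [].
rewrite !E1.
have -> : F Di = F Di'.
  by apply: funext => p; apply: funext => k; rewrite /F E.
by [].
Qed.

Lemma round_eq (R : realType) (d : nat) (X : Type) (N n K : nat)
  (f : 'rV[R]_d -> X -> R) (M : 'M[R]_N) (eta : nat -> R) (beta : R)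
  (D Dt : 'I_N -> 'I_n -> X) (i0 : 'I_N) (j0 : 'I_n) (s : selection N n K) t W :
  (forall i j, (i, j) != (i0, j0) -> D i j = Dt i j) ->
  (forall k, s (i0, k) != j0) ->
  round f M eta beta D t s W = round f M eta beta Dt t s W.
Proof.
move=> HD Hs.
rewrite /round; apply: funext => i; apply: eq_bigr => l _.
have E : forall k, D l (s (l, k)) = Dt l (s (l, k)).
  move=> k; apply: HD; apply/negP => /eqP [el es]; subst l.
  by move: (Hs k); rewrite es eqxx.
exact: (f_equal (fun v => M i l *: v) (@local_run_ext _ _ _ _ _ _ f beta (eta t) (D l) (Dt l) l s (W l) E)).
Qed.

Lemma run_eq (R : realType) (d : nat) (X : Type) (N n K : nat)
  (f : 'rV[R]_d -> X -> R) (M : 'M[R]_N) (eta : nat -> R) (beta : R)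
  (D Dt : 'I_N -> 'I_n -> X) (i0 : 'I_N) (j0 : 'I_n) :
  (forall i j, (i, j) != (i0, j0) -> D i j = Dt i j) ->
  forall ss t W,
  all (fun s : selection N n K => [forall k, s (i0, k) != j0]) ss ->
  run_from f M eta beta D t W ss = run_from f M eta beta Dt t W ss.
Proof.
move=> HD; elim=> [|s ss IH] t W; first by [].
move=> /andP[/forallP Hs Hss].
have Hr := @round_eq _ _ _ _ _ _ f M eta beta D Dt i0 j0 s t W HD Hs.
change (run_from f M eta beta D t.+1 (round f M eta beta D t s W) ss =
        run_from f M eta beta Dt t.+1 (round f M eta beta Dt t s W) ss).
rewrite Hr; exact: IH.
Qed.

Lemma ind_all (R : realType) (T : Type) (x0 : T) (P : pred T) (s : seq T) :
  ((~~ all P s)%:R : R) <= \sum_(t < size s) (~~ P (nth x0 s t))%:R.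
Proof.
elim: s => [|x s IH] /=; first by rewrite big_ord0.
rewrite big_ord_recl /=.
case: (P x) => /=.
  by rewrite add0r.
rewrite lerDl; apply: sumr_ge0 => i _; exact: ler0n.
Qed.

Lemma sum_ind (R : realType) (T : finType) (b : pred T) :
  \sum_(o : T) ((b o)%:R : R) = (#|b|%:R : R).
Proof.
rewrite -sum1_card natr_sum [RHS]big_mkcond; apply: eq_bigr => o _.
by rewrite unfold_in; case: (b o).
Qed.

Lemma enorm0 (R : realType) d : enorm (0 : 'rV[R]_d) = 0.
Proof. by rewrite /enorm big1 ?sqrtr0 // => j _; rewrite mxE expr2 mulr0. Qed.


Theorem lemmaA4 (R : realType) (d : nat) (X : Type) (N n K T t0 : nat)
  (f : 'rV[R]_d -> X -> R) (B : R)
  (adj : rel 'I_N) (M : 'M[R]_N) (eta : nat -> R) (beta : R)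
  (w0 : 'I_N -> 'rV[R]_d) (D Dt : 'I_N -> 'I_n -> X) :
  (0 < N)%N -> (0 < n)%N ->
  (* the communication graph and the mixing matrix *)
  symmetric adj -> irreflexive adj ->
  M^T = M ->
  (forall i j, M i j != 0 -> (i == j) || adj i j) ->
  (forall x : 'cV[R]_N, (1%:M - M) *m x = 0 <-> exists c : R, x = c *: const_mx 1) ->
  (forall x : 'cV[R]_N, (x^T *m M *m x) 0 0 <= (x^T *m x) 0 0) ->
  (forall x : 'cV[R]_N, x != 0 -> - (x^T *m x) 0 0 < (x^T *m M *m x) 0 0) ->
  (* the loss: nonnegative, bounded, B-Lipschitz *)
  (forall w x, 0 <= f w x) ->
  has_ubound [set f p.1 p.2 | p in [set: 'rV[R]_d * X]] ->
  (forall x w v, `|f w x - f v x| <= B * enorm (w - v)) ->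
  (* D and Dt differ in (at most) a single example *)
  (exists (i0 : 'I_N) (j0 : 'I_n),
     forall i j, (i, j) != (i0, j0) -> D i j = Dt i j) ->
  (t0 <= n)%N ->
  forall Xi : X,
  let Om := ((maxn T t0).-tuple (selection N n K))%type in
  let wb := fun t (o : Om) => wbar f M eta beta D w0 t o in
  let vb := fun t (o : Om) => wbar f M eta beta Dt w0 t o in
  let delta := fun t (o : Om) => enorm (wb t o - vb t o) in
  Exp (fun o : Om => `|f (wb T o) Xi - f (vb T o) Xi|)
  <= t0%:R * sup [set f p.1 p.2 | p in [set: 'rV[R]_d * X]]
       * (1 - ((n%:R - 1) / n%:R) ^+ K)
     + B * CondExp (delta T) (fun o : Om => delta t0 o == 0).
Proof.
move=> N0 n0 _ _ _ _ _ _ _ fge0 fub Lip [i0 [j0 HD]] t0n Xi.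
pose Om : finType := ((maxn T t0).-tuple (selection N n K))%type.
pose wb := fun t (o : Om) => wbar f M eta beta D w0 t o.
pose vb := fun t (o : Om) => wbar f M eta beta Dt w0 t o.
pose delta := fun t (o : Om) => enorm (wb t o - vb t o).
change (Exp (fun o : Om => `|f (wb T o) Xi - f (vb T o) Xi|)
  <= t0%:R * sup [set f p.1 p.2 | p in [set: 'rV[R]_d * X]]
       * (1 - ((n%:R - 1) / n%:R) ^+ K)
     + B * CondExp (delta T) (fun o : Om => delta t0 o == 0)).
set U := sup _.
set q := (n%:R - 1) / n%:R.
pose P := fun s : selection N n K => [forall k, s (i0, k) != j0].
pose L := maxn T t0.
have UB : forall w x, f w x <= U.
  by move=> w x; apply: (ub_le_sup fub); exists (w, x).
have U0 : 0 <= U := le_trans (fge0 0 Xi) (UB 0 Xi).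
have good_A : forall o : Om, all P (take t0 o) -> delta t0 o = 0.
  move=> o Ho.
  have E := @run_eq _ _ _ _ _ _ f M eta beta D Dt i0 j0 HD (take t0 o) 0 w0 Ho.
  by rewrite /delta /wb /vb /wbar E subrr enorm0.
pose s0 : selection N n K := [ffun=> Ordinal n0].
pose g := fun o : Om => `|f (wb T o) Xi - f (vb T o) Xi|.
pose A := fun o : Om => delta t0 o == 0.
pose c : R := #|Om|%:R.
have c0 : 0 < c.
  rewrite /c ltr0n; apply/card_gt0P; exists (mktuple (fun _ => s0)); done.
have gle : forall o, g o <= B * delta T o by move=> o; apply: Lip.
have gU : forall o, g o <= U.
  move=> o; rewrite /g ler_norml; have := fge0 (wb T o) Xi; have := fge0 (vb T o) Xi.
  have := UB (wb T o) Xi; have := UB (vb T o) Xi.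
  move=> h1 h2 h3 h4; apply/andP; split; lra.
have count_t : forall t : 'I_t0,
    \sum_(o : Om) ((~~ P (nth s0 o t))%:R : R) = c * (1 - q ^+ K).
  move=> t.
  pose t' : 'I_L := widen_ord (leq_maxr T t0) t.
  have -> : \sum_(o : Om) ((~~ P (nth s0 o t))%:R : R)
          = \sum_(o : Om) ((~~ P (tnth o t'))%:R : R).
    by apply: eq_bigr => o _; rewrite (tnth_nth s0).
  rewrite (sum_ind R Om (fun o : Om => ~~ P (tnth o t'))).
  have -> : #|(fun o : Om => ~~ P (tnth o t'))| =
            #|[pred o : L.-tuple (selection N n K) | (predC P) (tnth o t')]|.
    by apply: eq_card => o; rewrite !inE.
  rewrite card_tuple_coord.
  have HL : L = (L.-1).+1 by rewrite prednK // (leq_ltn_trans _ (ltn_ord t')).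
  have HP := cardC P.
  have Hq := @good_sel_ratio R N n K i0 j0 n0.
  have S0 : (0 < #|selection N n K|)%N by apply/card_gt0P; exists s0.
  have Hc : ((#|selection N n K| ^ maxn T t0)%:R : R)
      = #|selection N n K|%:R * (#|selection N n K| ^ L.-1)%:R.
    by rewrite -natrM -expnS -HL.
  rewrite /c card_tuple Hc natrM.
  have -> : #|[predC P]| = (#|selection N n K| - #|P|)%N.
    by rewrite -HP addKn.
  rewrite natrB; last by rewrite -HP leq_addr.
  rewrite /q -Hq.
  have SR : (#|selection N n K|%:R : R) != 0 by rewrite pnatr_eq0 -lt0n.
  have -> : #|[pred s : {ffun 'I_N * 'I_K -> 'I_n} | [forall k, s (i0, k) != j0]]| = #|P|.
    by apply: eq_card.
  rewrite /selection. field.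
  done.
have Hbad : \sum_(o | ~~ A o) g o <= U * (t0%:R * (c * (1 - q ^+ K))).
  apply: le_trans (_ : _ <= \sum_(o : Om) U * (~~ all P (take t0 o))%:R) _.
    rewrite big_mkcond /=; apply: ler_sum => o _; case: ifP => HA.
      have Hg : ~~ all P (take t0 o).
        by apply/negP => /good_A H; move: HA; rewrite /A H eqxx.
      by rewrite Hg mulr1.
    by rewrite mulr_ge0.
  apply: le_trans (_ : _ <= \sum_(o : Om) U * \sum_(t < t0) (~~ P (nth s0 o t))%:R) _.
    apply: ler_sum => o _; apply: ler_wpM2l => //.
    have H := ind_all R _ s0 P (take t0 o).
    rewrite size_takel ?size_tuple ?leq_maxr // in H.
    apply: le_trans H _; rewrite le_eqVlt; apply/orP; left; apply/eqP; apply: eq_bigr => t _.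
    by rewrite nth_take.
  rewrite -mulr_sumr exchange_big /=; apply: ler_wpM2l => //.
  rewrite le_eqVlt; apply/orP; left; apply/eqP.
  rewrite (eq_bigr (fun _ => c * (1 - q ^+ K))); last by move=> t _; apply: count_t.
  by rewrite sumr_const card_ord mulr_natl.
have Hgood : \sum_(o | A o) g o <= \sum_(o | A o) B * delta T o.
  by apply: ler_sum => o _; apply: gle.
have SA0 : 0 <= \sum_(o | A o) B * delta T o.
  apply: sumr_ge0 => o _; apply: le_trans (gle o); exact: normr_ge0.
have Hcond : c^-1 * \sum_(o | A o) B * delta T o <= B * CondExp (delta T) A.
  rewrite /CondExp mulrA [B * _]mulr_sumr.
  have [nA0|nApos] := eqVneq #|A| 0%N.
    have A0 : A =1 xpred0 by move=> o; have := card0_eq nA0 o; rewrite !inE.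
    by rewrite !(big_pred0 _ _ _ _ A0) mulr0 mul0r.
  rewrite mulrC; apply: ler_wpM2l => //.
  rewrite lef_pV2 ?posrE ?c0 ?ltr0n ?lt0n //.
  by rewrite /c ler_nat max_card.
rewrite /Exp -/c.
have Hsum : \sum_(o : Om) g o = \sum_(o | A o) g o + \sum_(o | ~~ A o) g o := bigID A _ _.
apply: le_trans (_ : _ <= c^-1 * (\sum_(o | A o) g o + \sum_(o | ~~ A o) g o)) _.
  by rewrite -Hsum; exact: lexx.
have Hsplit : c^-1 * (\sum_(o | A o) g o + \sum_(o | ~~ A o) g o)
   <= c^-1 * \sum_(o | A o) B * delta T o + c^-1 * (U * (t0%:R * (c * (1 - q ^+ K)))).
  rewrite mulrDr; apply: lerD; apply: ler_wpM2l; rewrite ?invr_ge0 ?(ltW c0) //.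
apply: (le_trans Hsplit).
have -> : c^-1 * (U * (t0%:R * (c * (1 - q ^+ K)))) = t0%:R * U * (1 - q ^+ K).
  by field; rewrite gt_eqF.
rewrite addrC; apply: lerD; [exact: lexx | exact: Hcond].
Qed.
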